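(* Let $X$ be a finite-dimensional real Banach space with $\dim X\ge 2$. Then for every $t\in[0,1]$, $S_P(X)\ge \frac{\gamma_X(t)+t^2-3}{2+2t^2}$.
   Context: For a real Banach space $X$ with unit sphere $S_X$, the P-angle constant is $S_P(X)=\sup\left\{\frac{\|x+y\|^2+\|x-y\|^2-4}{2\|x+y\|\,\|x-y\|}: x,y\in S_X,\ x\neq \pm y\right\}$. For $t\in[0,1]$, $\gamma_X(t)=\sup\left\{\frac{\|x+ty\|^2+\|x-ty\|^2}{2}: x,y\in S_X\right\}$. *)

(* Defs.v *)
From HB Require Import structures.
From mathcomp Require Import all_boot all_order all_algebra.
From mathcomp Require Import all_classical all_reals all_analysis.
Set Implicit Arguments. Unset Strict Implicit. Unset Printing Implicit Defensive.
Import Order.TTheory GRing.Theory Num.Theory.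
Import numFieldNormedType.Exports.
Local Open Scope classical_set_scope.
Local Open Scope ring_scope.

Definition SP_const (R : realType) (X : normedModType R) : R :=
  sup [set r : R | exists x y : X,
        `|x| = 1 /\ `|y| = 1 /\ x <> y /\ x <> - y /\
        r = (`|x + y| ^+ 2 + `|x - y| ^+ 2 - 4) / (2 * `|x + y| * `|x - y|)].

Definition gammaX (R : realType) (X : normedModType R) (t : R) : R :=
  sup [set r : R | exists x y : X,
        `|x| = 1 /\ `|y| = 1 /\
        r = (`|x + t *: y| ^+ 2 + `|x - t *: y| ^+ 2) / 2].

(* Main.v *)
Require Import Defs.
From HB Require Import structures.
From mathcomp Require Import all_boot all_order all_algebra.
From mathcomp Require Import all_classical all_reals all_analysis.
From mathcomp Require Import ring lra.
Import Order.TTheory GRing.Theory Num.Theory.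
Import numFieldNormedType.Exports.
Local Open Scope ring_scope.

Section S.
Variables (R : realType) (X : normedModType R).


Definition spv (x y : X) : R :=
  (`|x + y| ^+ 2 + `|x - y| ^+ 2 - 4) / (2 * `|x + y| * `|x - y|).

Lemma spv_pos (x y : X) : x <> y -> x <> - y -> 0 < `|x + y| /\ 0 < `|x - y|.
Proof.
move=> h1 h2; split; rewrite normr_gt0; apply/eqP.
  by move/eqP; rewrite addr_eq0 => /eqP.
by move/eqP; rewrite subr_eq0 => /eqP.
Qed.

Lemma spv_le1 (x y : X) : `|y| = 1 -> x <> y -> x <> - y -> spv x y <= 1.
Proof.
move=> hy h1 h2; have [hA hB] := spv_pos _ _ h1 h2.
have d1 : `|x + y| <= `|x - y| + 2.
  have -> : x + y = (x - y) + (y + y) by rewrite addrA subrK.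
  by apply: (le_trans (ler_normD _ _)); rewrite lerD2l (le_trans (ler_normD _ _)) // hy.
have d2 : `|x - y| <= `|x + y| + 2.
  have -> : x - y = (x + y) + (- y - y) by rewrite addrA addrK.
  apply: (le_trans (ler_normD _ _)); rewrite lerD2l (le_trans (ler_normD _ _)) //.
  by rewrite normrN hy.
rewrite /spv ler_pdivrMr; last by rewrite !mulr_gt0.
set A := `|x + y| in hA d1 d2 *; set B := `|x - y| in hB d1 d2 *.
nra.
Qed.


Lemma iso_exists (x z : X) : `|x| = 1 ->
  (forall a b : R, a *: x + b *: z = 0 -> a = 0 /\ b = 0) ->
  exists y : X, `|y| = 1 /\ x <> y /\ x <> - y /\ `|x + y| = `|x - y|.
Proof.
move=> nx ind.
pose p (s : R) := (1 - 2 * s) *: x + (s * (1 - s)) *: z.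
have pnz s : p s != 0.
  apply/eqP => /ind [h1 h2].
  have e : s = 1 / 2 by rewrite -[s](mulfK (_ : (2:R) != 0)) //; lra.
  move: h2; rewrite e; lra.
pose y s := (`|p s|)^-1 *: p s.
have ny s : `|y s| = 1.
  by rewrite /y normrZ normrV ?unitfE ?normr_eq0 // normr_id mulVf // normr_eq0.
pose h s := `|x + y s| - `|x - y s|.
have pc : continuous p.
  move=> s; rewrite /p; apply: cvgD; apply: cvgZr_tmp.
    by apply: cvgB; [exact: cvg_cst | apply: cvgM; [exact: cvg_cst | exact: cvg_id]].
  by apply: cvgM; [exact: cvg_id | apply: cvgB; [exact: cvg_cst | exact: cvg_id]].
have yc : continuous y.
  move=> s; rewrite /y; apply: cvgZ; last exact: pc.
  apply: cvgV; first by rewrite normr_eq0.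
  exact: (cvg_norm (pc s)).
have hc : continuous h.
  move=> s; rewrite /h; apply: cvgB.
    apply: cvg_norm.
    by apply: cvgD; [exact: cvg_cst | exact: yc].
  apply: cvg_norm.
  by apply: cvgB; [exact: cvg_cst | exact: yc].
have y0 : y 0 = x by rewrite /y /p !(mulr0, subr0, mul0r, scale0r, addr0, scale1r) nx invr1 scale1r.
have y1 : y 1 = - x.
  rewrite /y /p subrr mulr0 scale0r addr0 mulr1.
  have -> : (1 - 2 : R) = -1 by lra.
  by rewrite scaleN1r normrN nx invr1 scale1r.
have h0 : h 0 = 2.
  rewrite /h y0 subrr normr0 subr0 -(scale1r x) -scalerDl normrZ nx mulr1.
  by rewrite ger0_norm.
have h1 : h 1 = - 2.
  rewrite /h y1 subrr opprK normr0 sub0r -(scale1r x) -scalerDl normrZ nx mulr1.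
  by rewrite ger0_norm.
have [c _ hc0] : exists2 c, c \in `[0, 1] & h c = 0.
  apply: IVT => //; first exact: continuous_subspaceT.
  rewrite h0 h1; apply/andP; split; [rewrite ge_min; apply/orP; right | rewrite le_max; apply/orP; left]; lra.
exists (y c); split; first exact: ny.
split; [|split].
- move=> e; move: hc0; rewrite /h -e subrr normr0 subr0 -(scale1r x) -scalerDl normrZ nx mulr1 ger0_norm //; lra.
- move=> e; move: hc0; rewrite /h -[y c]opprK -e subrr opprK normr0 sub0r -(scale1r x) -scalerDl normrZ nx mulr1 ger0_norm //; lra.
- by apply/eqP; rewrite -subr_eq0; apply/eqP.
Qed.
Lemma decomp (x y : X) (t : R) (s : R) (hs : s = 1 \/ s = -1) :
  x + (s * t) *: y = ((1 + t) / 2) *: (x + s *: y) + ((1 - t) / 2) *: (x - s *: y).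
Proof.
rewrite scalerDr scalerBr addrACA -scalerDl !scalerA.
have -> : ((1 + t) / 2 * s) *: y - ((1 - t) / 2 * s) *: y = (((1 + t) / 2 - (1 - t) / 2) * s) *: y
  by rewrite [in RHS]mulrBl scalerBl.
have -> : (1 + t) / 2 + (1 - t) / 2 = 1 :> R by field.
have -> : ((1 + t) / 2 - (1 - t) / 2) = t :> R by field.
by rewrite scale1r mulrC.
Qed.

Lemma norm_le (x y : X) (t : R) (s : R) (hs : s = 1 \/ s = -1) : 0 <= t -> t <= 1 ->
  `|x + (s * t) *: y| <= ((1 + t) / 2) * `|x + s *: y| + ((1 - t) / 2) * `|x - s *: y|.
Proof.
move=> t0 t1; rewrite decomp //; apply: (le_trans (ler_normD _ _)).
rewrite !normrZ !ger0_norm //; lra.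
Qed.

Lemma gam_pt (x y : X) (t S : R) : 0 <= S -> 0 <= t -> t <= 1 ->
  `|x| = 1 -> `|y| = 1 -> (x <> y -> x <> - y -> spv x y <= S) ->
  (`|x + t *: y| ^+ 2 + `|x - t *: y| ^+ 2) / 2 <= (2 + 2 * t ^+ 2) * S - t ^+ 2 + 3.
Proof.
move=> S0 t0 t1 nx ny hsp.
have ex2 : forall a b : R, a ^+ 2 + b ^+ 2 <= 2 + 2 * t ^+ 2 + 4 * ((1 + t ^+ 2) * S + 1 - t ^+ 2) ->
  (a ^+ 2 + b ^+ 2) / 2 <= (2 + 2 * t ^+ 2) * S - t ^+ 2 + 3.
  by move=> a b h; rewrite ler_pdivrMr //; lra.
apply: ex2.
have c0 : 0 <= (1 + t ^+ 2) * S + 1 - t ^+ 2 by nra.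
have e1 : x + t *: y = x + (1 * t) *: y by rewrite mul1r.
have e2 : x - t *: y = x + (-1 * t) *: y by rewrite mulN1r scaleNr.
have [xy|nxy] := eqVneq x y.
  have -> : x + t *: y = (1 + t) *: x by rewrite -xy scalerDl scale1r.
  have -> : x - t *: y = (1 - t) *: x by rewrite -xy scalerBl scale1r.
  rewrite !normrZ nx !mulr1 !ger0_norm; [nra | lra | lra].
have [xy'|nxy'] := eqVneq x (- y).
  have -> : x + t *: y = (t - 1) *: y by rewrite xy' scalerBl scale1r addrC.
  have -> : x - t *: y = (- 1 - t) *: y by rewrite xy' scalerBl scaleN1r.
  rewrite !normrZ ny !mulr1 !ler0_norm; [nra | lra | lra].
move/eqP: nxy' => nxy'; move/eqP: nxy => nxy; have h := hsp nxy nxy'.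
have [hA hB] := spv_pos _ _ nxy nxy'.
have la := norm_le x y t 1 (or_introl erefl) t0 t1.
have lb := norm_le x y t (-1) (or_intror erefl) t0 t1.
rewrite scale1r in la; rewrite !scaleN1r opprK in lb.
rewrite e1 e2.
set a := `|x + (1 * t) *: y| in la *; set b := `|x + (-1 * t) *: y| in lb *.
set A := `|x + y| in la lb h hA *; set B := `|x - y| in la lb h hB *.
have A2 : A <= 2 by rewrite /A (le_trans (ler_normD _ _)) // nx ny; lra.
have B2 : B <= 2 by rewrite /B (le_trans (ler_normB _ _)) // nx ny; lra.
have hh : A ^+ 2 + B ^+ 2 - 4 <= S * (2 * A * B).
  by move: h; rewrite /spv -/A -/B ler_pdivrMr // !mulr_gt0.
have a0 : 0 <= a by apply: normr_ge0.
have b0 : 0 <= b by apply: normr_ge0.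
set U := (1 + t) / 2 * A + (1 - t) / 2 * B in la.
set V := (1 + t) / 2 * B + (1 - t) / 2 * A in lb.
have ea : a ^+ 2 <= U ^+ 2 by nra.
have eb : b ^+ 2 <= V ^+ 2 by nra.
have eUV : U ^+ 2 + V ^+ 2 = (1 + t ^+ 2) / 2 * (A ^+ 2 + B ^+ 2) + (1 - t ^+ 2) * (A * B).
  by rewrite /U /V; field.
have k1 : (1 + t ^+ 2) / 2 * (A ^+ 2 + B ^+ 2 - 4) <= (1 + t ^+ 2) / 2 * (S * (2 * A * B)).
  by apply: ler_wpM2l => //; nra.
have k2 : 0 <= (4 - A * B) * ((1 + t ^+ 2) * S + 1 - t ^+ 2).
  by apply: mulr_ge0 => //; nra.
nra.
Qed.

Lemma SP_ge (x y : X) : `|x| = 1 -> `|y| = 1 -> x <> y -> x <> - y ->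
  spv x y <= SP_const X.
Proof.
move=> nx ny h1 h2; rewrite /SP_const; apply: ub_le_sup; last by exists x, y.
exists 1 => r [a [b [na [nb [g1 [g2 ->]]]]]]; exact: spv_le1 nb g1 g2.
Qed.

Lemma SP_nonneg (x z : X) : `|x| = 1 ->
  (forall a b : R, a *: x + b *: z = 0 -> a = 0 /\ b = 0) -> 0 <= SP_const X.
Proof.
move=> nx ind; have [y [ny [h1 [h2 hAB]]]] := iso_exists x z nx ind.
have [hA hB] := spv_pos _ _ h1 h2.
have [le2|lt2] := lerP 2 (`|x + y| ^+ 2).
  apply: le_trans (SP_ge _ _ nx ny h1 h2); rewrite /spv -hAB.
  by apply: divr_ge0; [lra | rewrite !mulr_ge0 // ltW].
set a := `|x + y| in hA hAB lt2.
pose u := a^-1 *: (x + y); pose v := a^-1 *: (x - y).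
have ha0 : a != 0 by rewrite gt_eqF.
have nu : `|u| = 1 by rewrite /u normrZ normrV ?unitfE // normr_id mulVf.
have nv : `|v| = 1 by rewrite /v normrZ normrV ?unitfE // normr_id -hAB mulVf.
have uv1 : u + v = a^-1 *: (x + x) by rewrite /u /v -scalerDr addrACA subrr addr0.
have uv2 : u - v = a^-1 *: (y + y).
  by rewrite /u /v -scalerBr opprB [y - x]addrC addrA [x + y]addrC addrK.
have n1 : `|u + v| = a^-1 * 2.
  by rewrite uv1 normrZ normrV ?unitfE // normr_id -mulr2n -scaler_nat normrZ nx mulr1 ger0_norm.
have n2 : `|u - v| = a^-1 * 2.
  by rewrite uv2 normrZ normrV ?unitfE // normr_id -mulr2n -scaler_nat normrZ ny mulr1 ger0_norm.
have ai : 0 < a^-1 by rewrite invr_gt0.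
have g1 : u <> v.
  move=> e; move: n2; rewrite e subrr normr0 => /eqP; rewrite eq_sym mulf_eq0 invr_eq0 (negbTE ha0) /=.
  by move/eqP; lra.
have g2 : u <> - v.
  move=> e; move: n1; rewrite e addNr normr0 => /eqP; rewrite eq_sym mulf_eq0 invr_eq0 (negbTE ha0) /=.
  by move/eqP; lra.
apply: le_trans (SP_ge _ _ nu nv g1 g2); rewrite /spv n1 n2.
have aa : a^-1 * a = 1 by rewrite mulVf.
apply: divr_ge0; last by rewrite !mulr_ge0 // ltW.
nra.
Qed.
End S.

Theorem corollary4p6 (R : realType) (X : completeNormedModType R)
  (n : nat) (hn : (2 <= n)%N) (f : {linear 'rV[R]_n -> X}) (hf : bijective f)
  (t : R) (ht0 : 0 <= t) (ht1 : t <= 1) :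
  (gammaX X t + t ^+ 2 - 3) / (2 + 2 * t ^+ 2) <= SP_const X.
Proof.
have n0 : (0 < n)%N by apply: leq_trans hn.
have n1 : (1 < n)%N by [].
pose i0 : 'I_n := Ordinal n0; pose i1 : 'I_n := Ordinal n1.
have i10 : (i1 == i0) = false by [].
pose e0 : 'rV[R]_n := delta_mx 0 i0; pose e1 : 'rV[R]_n := delta_mx 0 i1.
have finj := bij_inj hf.
pose w := f e0.
have w0 : w != 0.
  apply/eqP => E; have : f e0 = f 0 by rewrite raddf0.
  move/finj => /(congr1 (fun M : 'rV[R]_n => M 0 i0)); rewrite !mxE !eqxx /=.
  by move/eqP; rewrite oner_eq0.
pose x := `|w|^-1 *: w.
have nx : `|x| = 1.
  by rewrite /x normrZ normrV ?unitfE ?normr_eq0 // normr_id mulVf // normr_eq0.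
have ind : forall a b : R, a *: x + b *: f e1 = 0 -> a = 0 /\ b = 0.
  move=> a b E.
  have E' : f ((a * `|w|^-1) *: e0 + b *: e1) = f 0.
    by rewrite raddf0 linearD !linearZ /= -scalerA.
  have E2 := finj _ _ E'.
  have c0 := congr1 (fun M : 'rV[R]_n => M 0 i0) E2.
  have c1 := congr1 (fun M : 'rV[R]_n => M 0 i1) E2.
  move: c0 c1; rewrite /= !mxE !eqxx i10 eq_sym i10 /= !mulr1 !mulr0 addr0 add0r.
  move=> /eqP; rewrite mulf_eq0 invr_eq0 normr_eq0 (negbTE w0) orbF => /eqP -> ->.
  by [].
have S0 := SP_nonneg _ _ x (f e1) nx ind.
have gb : gammaX X t <= (2 + 2 * t ^+ 2) * SP_const X - t ^+ 2 + 3.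
  rewrite /gammaX; apply: ge_sup.
    by exists ((`|x + t *: x| ^+ 2 + `|x - t *: x| ^+ 2) / 2); exists x, x.
  move=> r [a [b [na [nb ->]]]]; apply: gam_pt => // g1 g2.
  exact: SP_ge.
rewrite ler_pdivrMr; last by nra.
nra.
Qed.
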